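(* For every $n\in\mathbb{N}$, \[ \mathcal{M}^{(4)}(n)=\min_{1\le s\le t\le n}\mathcal{M}^{(4)}(n,s,t)=\Bigl\lfloor\frac{n^2-28n+245}{216}\Bigr\rfloor-\begin{cases}1,& n \bmod 108\in I,\\ 0,&\text{otherwise},\end{cases} \] where $I=\{0,1,27,28,43,47,48,53,58,63,67,68,69,73,78,83,88,89,93\}$.
   Context: For real $a>0$ and integers $1\le s\le t\le n$, $\mathcal{M}^{(a)}(n,s,t)$ is the number of ordered triples $T=(x,y,x+\lfloor ay\rfloor)\in\{1,\dots,n\}^3$ such that $T\in(\{1,\dots,s\}\cup\{t+1,\dots,n\})^3$ or $T\in\{s+1,\dots,t\}^3$ (monochromatic generalized Schur triples under the coloring $R^sB^{t-s}R^{n-t}$). For $a=4$ the triples are $(x,y,x+4y)$. *)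

(* Defs.v *)
From mathcomp Require Import all_boot.
Set Implicit Arguments. Unset Strict Implicit. Unset Printing Implicit Defensive.

(* Coloring R^s B^(t-s) R^(n-t) of {1..n}: i is red iff i <= s or t < i,
   blue iff s < i <= t. *)
Definition red (s t i : nat) : bool := (i <= s) || (t < i).
Definition blue (s t i : nat) : bool := (s < i) && (i <= t).

Definition mono (s t x y z : nat) : bool :=
  [&& red s t x, red s t y & red s t z] || [&& blue s t x, blue s t y & blue s t z].

(* M^(a)(n,s,t) for a natural number a (so floor(a*y) = a*y):
   the number of ordered triples (x, y, x + a*y) in {1..n}^3 that are
   monochromatic.  Since the third coordinate is determined by (x,y),
   we count the pairs (x,y). *)
Definition Mnst (a n s t : nat) : nat :=
  \sum_(1 <= x < n.+1) \sum_(1 <= y < n.+1)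
     ((x + a * y <= n) && mono s t x y (x + a * y)).

(* M^(a)(n) = min over 1 <= s <= t <= n of M^(a)(n,s,t)
   (meaningful for n >= 1; the initial value Mnst a n 1 1 is itself one of
   the minimized values). *)
Definition Mmin (a n : nat) : nat :=
  \big[minn/Mnst a n 1 1]_(1 <= s < n.+1) \big[minn/Mnst a n 1 1]_(s <= t < n.+1)
     Mnst a n s t.

Definition I_exc : seq nat :=
  [:: 0; 1; 27; 28; 43; 47; 48; 53; 58; 63; 67; 68; 69; 73; 78; 83; 88; 89; 93].

(* Main.v *)
From Stdlib Require Import ZArith Lia.
From Stdlib Require List.

Section Crude.
Local Open Scope Z_scope.
Lemma X1a a b c : 0 <= a -> 0 <= b -> 4*a+5 <= c -> c <= 20*a+4*b -> 27 <= 5*a+b+c ->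
  27*((a*a-4*a)+(b*b-4*b)+8*a*c-16*a*a-16*a) >= (5*a+b+c)*(5*a+b+c) - 28*(5*a+b+c) + 245 - 215.
Proof. intros. assert (0 <= (c - (4*a+5)) * (20*a+4*b - c)) by nia. nia. Qed.

Lemma sqge x k : 0 <= k -> k <= x -> k * k <= x * x.
Proof. intros. apply Z.mul_le_mono_nonneg; lia. Qed.

Lemma X1b a b c : 0 <= a -> 0 <= b -> 4*a+5 <= c -> 20*a+4*b <= c -> 27 <= 5*a+b+c ->
  27*((a*a-4*a)+(b*b-4*b)+8*a*c-16*a*a-16*a + (c-20*a-4*b)*(c-20*a-4*b) - 4*(c-20*a-4*b)) >= (5*a+b+c)*(5*a+b+c) - 28*(5*a+b+c) + 245 - 215.
Proof.
intros ha hb h1 h2 h3. set (d := c - 20*a - 4*b).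
assert (Hc : c = 20*a+4*b+d) by (unfold d; lia). clearbody d. subst c.
match goal with |- ?L >= ?R =>
assert (E : 2*(L - R) = 6580*a*a + 1228*a*b + 332*a*d + 320*a + (2*b-5*d+16)*(2*b-5*d+16) + 27*d*d - 316) by ring end.
enough (0 <= 6580*a*a + 1228*a*b + 332*a*d + 320*a + (2*b-5*d+16)*(2*b-5*d+16) + 27*d*d - 316) by lia.
clear E.
assert (hd : 0 <= d) by lia.
pose proof (Z.mul_nonneg_nonneg a b ha hb).
pose proof (Z.mul_nonneg_nonneg a d ha hd).
pose proof (Z.square_nonneg (2*b-5*d+16)).
pose proof (Z.square_nonneg d).
destruct (Z.eq_dec a 0) as [Ha|Ha].
- subst a. destruct (Z_le_gt_dec 4 d).
  + pose proof (sqge d 4 ltac:(lia) ltac:(lia)). lia.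
  + assert (Hd4 : d = 0 \/ d = 1 \/ d = 2 \/ d = 3) by lia.
    destruct Hd4 as [Hd4|[Hd4|[Hd4|Hd4]]]; subst d.
    * pose proof (sqge (2*b-5*0+16) 28 ltac:(lia) ltac:(lia)). lia.
    * pose proof (sqge (2*b-5*1+16) 23 ltac:(lia) ltac:(lia)). lia.
    * pose proof (sqge (2*b-5*2+16) 16 ltac:(lia) ltac:(lia)). lia.
    * pose proof (sqge (2*b-5*3+16) 11 ltac:(lia) ltac:(lia)). lia.
- pose proof (sqge a 1 ltac:(lia) ltac:(lia)). lia.
Qed.
End Crude.

Require Import Defs.
From mathcomp Require Import all_boot zify.
Set Implicit Arguments. Unset Strict Implicit. Unset Printing Implicit Defensive.

Lemma pw_low n s t x y : 1 <= x <= n -> 1 <= y <= n -> s <= t -> t <= n ->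
  ((0 < x) && (x + 4*y <= s)) + (s < y) * ((s < x) && (x + 4*y <= t))
  + (y <= s) * ((t < x) && (x + 4*y <= n)) + (t < y) * ((t < x) && (x + 4*y <= n))
  <= ((x + 4 * y <= n) && mono s t x y (x + 4 * y)).
Proof.
rewrite /mono /red /blue => /andP[? ?] /andP[? ?] ? ?.
Time lia.
Qed.

Lemma pw_up n s t x y : 1 <= x <= n -> 1 <= y <= n -> 5*s <= t -> t <= n ->
  n - t <= 4*s + 4 -> n < 4*t+5 ->
  ((x + 4 * y <= n) && mono s t x y (x + 4 * y)) <=
  ((0 < x) && (x + 4*y <= s)) + (s < y) * ((s < x) && (x + 4*y <= t))
  + (0 < y) * ((t < x) && (x + 4*y <= n)).
Proof.
rewrite /mono /red /blue => /andP[? ?] /andP[? ?] ? ? ? ?.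
Time lia.
Qed.

Definition T (m : nat) : nat := \sum_(1 <= y < m.+1) (m - 4 * y).

Lemma cntx lo k hi N :
  \sum_(1 <= x < N.+1) ((lo < x) && (x + k <= hi)) = minn (hi - k) N - lo.
Proof.
elim: N => [|N IH]; first by rewrite big_geq //; lia.
rewrite big_nat_recr //= IH; lia.
Qed.

Lemma extend (F : nat -> nat) N1 N2 : N1 <= N2 ->
  (forall y, N1 <= y < N2 -> F y = 0) ->
  \sum_(1 <= y < N1) F y = \sum_(1 <= y < N2) F y.
Proof.
move=> le12 H.
case: N1 le12 H => [|N1] le12 H.
  rewrite big_geq // big_nat_cond big1 // => y /andP[/andP[y1 yN] _].
  by apply: H; lia.
rewrite (@big_cat_nat _ _ _ N1.+1 1 N2) //= [\sum_(N1.+1 <= i < N2) F i]big_nat_cond [\sum_(N1.+1 <= i < N2 | _) F i]big1 ?addn0 //.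
by move=> y /andP[/andP[? ?] _]; apply: H; lia.
Qed.

Lemma S1 lo m N : m <= 4 * N + 4 ->
  \sum_(1 <= y < N.+1) (lo < y) * (m - 4 * y) = T (m - 4 * lo).
Proof.
elim: lo m N => [|lo IH] m N hm.
  rewrite subn0 /T.
  rewrite (@eq_big_nat _ _ _ 1 N.+1 _ (fun y => m - 4 * y)); last by move=> y /andP[y1 _]; rewrite y1 mul1n.
  rewrite (@extend (fun y => m - 4 * y) N.+1 (N + m).+1); last 2 first.
  - lia.
  - move=> y ?; lia.
  rewrite (@extend (fun y => m - 4 * y) m.+1 (N + m).+1) //; first lia.
  move=> y ?; lia.
case: N hm => [|N] hm.
  rewrite big_geq //; rewrite /T big_nat_cond big1 // => y /andP[/andP[? ?] _]; lia.
rewrite big_nat_recl //= mul0n add0n.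
have -> : m - 4 * lo.+1 = (m - 4) - 4 * lo by lia.
rewrite -(IH (m - 4) N); last lia.
apply: eq_bigr => y _.
have -> : (lo.+1 < y.+1) = (lo < y) by [].
congr (_ * _); lia.
Qed.

Lemma T_rec m : T (m + 4) = T m + m.
Proof.
rewrite /T big_nat_recl; last lia.
have -> : m + 4 - 4 * 1 = m by lia.
rewrite addnC; congr (_ + _).
have := @S1 0 m (m + 3).
rewrite subn0 /T => <-; last lia.
rewrite (_ : (m + 3).+1 = m + 4); last lia.
apply: eq_big_nat => y /andP[y1 _]; rewrite y1 mul1n; lia.
Qed.

Definition e4 (m : nat) : nat :=
  if m %% 4 == 0 then 4 else if m %% 4 == 2 then 0 else 1.

Lemma T_closed m : 8 * T m + e4 m + 4 * m = m ^ 2 + 4.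
Proof.
have H : forall k r, r < 4 -> 8 * T (4 * k + r) + e4 (4 * k + r) + 4 * (4 * k + r) = (4 * k + r) ^ 2 + 4.
  move=> k r hr; elim: k => [|k IH].
    by case: r hr => [|[|[|[|]]]] //= _; rewrite /T /e4 unlock.
  have -> : 4 * k.+1 + r = (4 * k + r) + 4 by lia.
  rewrite T_rec.
  have -> : e4 (4 * k + r + 4) = e4 (4 * k + r).
    by rewrite /e4 modnDr.
  move: IH; lia.
have := H (m %/ 4) (m %% 4) (@ltn_pmod m 4 isT).
by rewrite (mulnC 4 (m %/ 4)) -divn_eq.
Qed.

Lemma Gsum (cy : nat -> nat) lo hi n : hi <= n ->
  \sum_(1 <= x < n.+1) \sum_(1 <= y < n.+1) (cy y * ((lo < x) && (x + 4 * y <= hi)))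
  = \sum_(1 <= y < n.+1) cy y * ((hi - lo) - 4 * y).
Proof.
move=> hn; rewrite exchange_big_nat; apply: eq_bigr => y _.
rewrite -big_distrr /= cntx; congr (_ * _); lia.
Qed.

Lemma Ssplit s m n : m <= 4 * n + 4 ->
  \sum_(1 <= y < n.+1) (y <= s) * (m - 4 * y) = T m - T (m - 4 * s).
Proof.
move=> hm.
have E0 := @S1 0 m n hm; rewrite muln0 subn0 in E0.
rewrite -E0 -(@S1 s m n hm).
have -> : \sum_(1 <= y < n.+1) (0 < y) * (m - 4 * y) =
  \sum_(1 <= y < n.+1) ((y <= s) * (m - 4 * y) + (s < y) * (m - 4 * y)).
  by apply: eq_big_nat => y /andP[y1 _]; rewrite y1 -mulnDl; case: (leqP y s).
by rewrite big_split /= addnK.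
Qed.

Lemma Mnst_low n s t : s <= t -> t <= n ->
  T s + T (t - 5 * s) + (T (n - t) - T (n - t - 4 * s)) + T (n - 5 * t) <= Mnst 4 n s t.
Proof.
move=> st tn; rewrite /Mnst.
apply: (@leq_trans (\sum_(1 <= x < n.+1) \sum_(1 <= y < n.+1)
   ((0 < y) * ((0 < x) && (x + 4*y <= s)) + (s < y) * ((s < x) && (x + 4*y <= t))
  + (y <= s) * ((t < x) && (x + 4*y <= n)) + (t < y) * ((t < x) && (x + 4*y <= n))))); last first.
  rewrite big_nat_cond [X in _ <= X]big_nat_cond; apply: leq_sum => x /andP[hx _].
  rewrite big_nat_cond [X in _ <= X]big_nat_cond; apply: leq_sum => y /andP[hy _].
  move: hx hy; rewrite /mono /red /blue; lia.
under eq_bigr => x _ do rewrite !big_split /=.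
rewrite !big_split /= !Gsum //; last by lia.
rewrite !subn0 (@S1 0) ?subn0; last lia.
rewrite (@S1 s); last lia.
rewrite (@S1 t); last lia.
rewrite Ssplit; last lia.
have -> : t - s - 4 * s = t - 5 * s by lia.
have -> : n - t - 4 * t = n - 5 * t by lia.
done.
Qed.

Lemma Mnst_up n s t : 5 * s <= t -> t <= n -> n - t <= 4 * s + 4 -> n < 4 * t + 5 ->
  Mnst 4 n s t <= T s + T (t - 5 * s) + T (n - t).
Proof.
move=> h1 h2 h3 h4; rewrite /Mnst.
apply: (@leq_trans (\sum_(1 <= x < n.+1) \sum_(1 <= y < n.+1)
   ((0 < y) * ((0 < x) && (x + 4*y <= s)) + (s < y) * ((s < x) && (x + 4*y <= t))
  + (0 < y) * ((t < x) && (x + 4*y <= n))))).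
  rewrite big_nat_cond [X in _ <= X]big_nat_cond; apply: leq_sum => x /andP[hx _].
  rewrite big_nat_cond [X in _ <= X]big_nat_cond; apply: leq_sum => y /andP[hy _].
  move: hx hy; rewrite /mono /red /blue; lia.
under eq_bigr => x _ do rewrite !big_split /=.
rewrite !big_split /= !Gsum //; last by lia.
rewrite !subn0 (@S1 0) ?subn0; last lia.
rewrite (@S1 s); last lia.
rewrite (@S1 0) ?subn0; last lia.
have -> : t - s - 4 * s = t - 5 * s by lia.
done.
Qed.

Section ZP.
Local Open Scope Z_scope.

Definition eZ (m : Z) : Z := if m mod 4 =? 0 then 4 else if m mod 4 =? 2 then 0 else 1.
Definition exZ (N : Z) : Z := if (Z.to_nat (N mod 108) \in I_exc) then 1 else 0.
Definition PZ (N : Z) : Z := N * N - 28 * N + 245.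
Definition PsiN (A B C N : Z) : Z :=
  27 * (A*A + B*B + C*C - 4*(A+B+C) + 12 - (eZ A + eZ B + eZ C)) - PZ N + (PZ N) mod 216 + 216 * exZ N.
Definition Psi (A B C : Z) : Z := PsiN A B C (5*A+B+C).

Lemma eZ_shift A k : eZ (A + 20 * k) = eZ A.
Proof. unfold eZ. replace (A + 20 * k) with (A + (5*k)*4) by ring. now rewrite Z_mod_plus_full. Qed.

Lemma Psi_shift A B C k : Psi (A + 20*k) (B + 4*k) (C + 4*k) = Psi A B C.
Proof.
unfold Psi, PsiN. rewrite !eZ_shift.
replace (5 * (A + 20 * k) + (B + 4 * k) + (C + 4 * k)) with ((5*A+B+C) + k * 108) by ring.
assert (H1 : PZ (5*A+B+C + k*108) = PZ (5*A+B+C) + (k*(5*A+B+C) + 54*k*k - 14*k)*216) by (unfold PZ; ring).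
assert (H2 : exZ (5*A+B+C + k*108) = exZ (5*A+B+C)) by (unfold exZ; now rewrite Z_mod_plus_full).
rewrite H1 H2 Z_mod_plus_full.
assert (eZ (B + 4*k) = eZ B) by (unfold eZ; replace (B+4*k) with (B + k*4) by ring; now rewrite Z_mod_plus_full).
assert (eZ (C + 4*k) = eZ C) by (unfold eZ; replace (C+4*k) with (C + k*4) by ring; now rewrite Z_mod_plus_full).
rewrite H H0. unfold PZ. ring.
Qed.

Definition Dq (A B C : Z) : Z := (5*B-A-8)*(5*B-A-8) + (5*C-A-8)*(5*C-A-8) + (B-C)*(B-C).

Lemma eZ_bound m : 0 <= eZ m <= 4.
Proof. unfold eZ. destruct (m mod 4 =? 0); [lia|]. destruct (m mod 4 =? 2); lia. Qed.
Lemma exZ_bound N : 0 <= exZ N <= 1.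
Proof. unfold exZ. destruct (_ \in _); lia. Qed.

Lemma Psi_D A B C : Psi A B C >= Dq A B C - 373.
Proof.
unfold Psi, PsiN, Dq.
pose proof (eZ_bound A). pose proof (eZ_bound B). pose proof (eZ_bound C).
pose proof (exZ_bound (5*A+B+C)).
pose proof (Z.mod_pos_bound (PZ (5*A+B+C)) 216 ltac:(lia)).
assert (E : 27 * (A*A + B*B + C*C - 4*(A+B+C) + 12) - PZ (5*A+B+C) = Dq A B C - 49) by (unfold PZ, Dq; ring).
unfold Dq in E. lia.
Qed.

Definition chk : bool :=
  List.forallb (fun i => List.forallb (fun j => List.forallb (fun k =>
     0 <=? Psi (Z.of_nat i) (Z.of_nat j - 2) (Z.of_nat k - 2)) (List.seq 0 12)) (List.seq 0 12)) (List.seq 0 20).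

Lemma chk_true : chk = true.
Proof. vm_compute. reflexivity. Qed.

Lemma sq_bound x : x * x < 373 -> -19 <= x <= 19.
Proof. intros. nia. Qed.

Lemma Psi_nonneg A B C : 0 <= Psi A B C.
Proof.
destruct (Z_le_gt_dec 373 (Dq A B C)) as [h|h].
{ pose proof (@Psi_D A B C). lia. }
set (k := A / 20).
assert (HA : A = 20 * k + A mod 20) by (apply Z.div_mod; lia).
pose proof (Z.mod_pos_bound A 20 ltac:(lia)).
set (A0 := A mod 20) in *. set (B0 := B - 4 * k). set (C0 := C - 4 * k).
assert (E : Psi A B C = Psi A0 B0 C0).
{ rewrite <- (@Psi_shift A0 B0 C0 k). f_equal; unfold B0, C0; lia. }
assert (ED : Dq A0 B0 C0 = Dq A B C) by (unfold Dq, B0, C0; rewrite HA; ring).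
rewrite E. rewrite <- ED in h. unfold Dq in h.
pose proof (Z.square_nonneg (5*B0-A0-8)). pose proof (Z.square_nonneg (5*C0-A0-8)).
pose proof (Z.square_nonneg (B0-C0)).
assert (hb : (5*B0-A0-8)*(5*B0-A0-8) < 373) by lia.
assert (hc : (5*C0-A0-8)*(5*C0-A0-8) < 373) by lia.
apply sq_bound in hb. apply sq_bound in hc.
pose proof chk_true as Hc. unfold chk in Hc.
rewrite List.forallb_forall in Hc.
specialize (Hc (Z.to_nat A0) ltac:(apply List.in_seq; lia)).
rewrite List.forallb_forall in Hc.
specialize (Hc (Z.to_nat (B0 + 2)) ltac:(apply List.in_seq; lia)).
rewrite List.forallb_forall in Hc.
specialize (Hc (Z.to_nat (C0 + 2)) ltac:(apply List.in_seq; lia)).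
apply Z.leb_le in Hc.
rewrite !Z2Nat.id in Hc; try lia.
replace (B0 + 2 - 2) with B0 in Hc by ring.
replace (C0 + 2 - 2) with C0 in Hc by ring.
exact Hc.
Qed.

End ZP.

Definition fN n := (n ^ 2 + 245 - 28 * n) %/ 216 - (n %% 108 \in I_exc).

Lemma e4Z m : Z.of_nat (e4 m) = eZ (Z.of_nat m).
Proof.
have H : (Z.of_nat m mod 4 = Z.of_nat (m %% 4))%Z.
  move: (divn_eq m 4) (@ltn_pmod m 4 isT); move: (m %/ 4) (m %% 4) => q r; Z.div_mod_to_equations; lia.
rewrite /e4 /eZ H.
have : m %% 4 < 4 by rewrite ltn_mod.
by case: (m %% 4) => [|[|[|[|]]]].
Qed.

Lemma exZ_nat n : exZ (Z.of_nat n) = Z.of_nat (n %% 108 \in I_exc).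
Proof.
have H : Z.to_nat (Z.of_nat n mod 108) = n %% 108.
  move: (divn_eq n 108) (@ltn_pmod n 108 isT); move: (n %/ 108) (n %% 108) => q r; Z.div_mod_to_equations; lia.
by rewrite /exZ H; case: (_ \in _).
Qed.

Lemma PZ_nat n : Z.of_nat (n ^ 2 + 245 - 28 * n) = PZ (Z.of_nat n).
Proof.
rewrite /PZ -mulnn; have := Z.square_nonneg (Z.of_nat n - 14); lia.
Qed.

Lemma K1 a b c : fN (5 * a + b + c) <= T a + T b + T c.
Proof.
move: (T_closed a) (T_closed b) (T_closed c) (@Psi_nonneg (Z.of_nat a) (Z.of_nat b) (Z.of_nat c)).
rewrite /Psi /PsiN -!e4Z -!mulnn.
have -> : (5 * Z.of_nat a + Z.of_nat b + Z.of_nat c)%Z = Z.of_nat (5 * a + b + c) by lia.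
rewrite exZ_nat -PZ_nat /fN.
move: (5 * a + b + c) => n.
move: (divn_eq (n ^ 2 + 245 - 28 * n) 216) (ltn_pmod (n ^ 2 + 245 - 28 * n) (isT : 0 < 216)).
move: (n ^ 2 + 245 - 28 * n) => p.
move: (p %/ 216) (p %% 216) => q r.
move: (n %% 108 \in I_exc) => bb.
move: (T a) (T b) (T c) (e4 a) (e4 b) (e4 c) => ta tb tc ea eb ec.
Z.div_mod_to_equations; lia.
Qed.

Lemma K2 a b c : Psi (Z.of_nat a) (Z.of_nat b) (Z.of_nat c) = 0%Z ->
  T a + T b + T c <= fN (5 * a + b + c).
Proof.
move: (T_closed a) (T_closed b) (T_closed c).
rewrite /Psi /PsiN -!e4Z -!mulnn.
have -> : (5 * Z.of_nat a + Z.of_nat b + Z.of_nat c)%Z = Z.of_nat (5 * a + b + c) by lia.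
rewrite exZ_nat -PZ_nat /fN.
move: (5 * a + b + c) => n.
move: (divn_eq (n ^ 2 + 245 - 28 * n) 216) (ltn_pmod (n ^ 2 + 245 - 28 * n) (isT : 0 < 216)).
move: (n ^ 2 + 245 - 28 * n) => p.
move: (p %/ 216) (p %% 216) => q r.
move: (n %% 108 \in I_exc) => bb.
move: (T a) (T b) (T c) (e4 a) (e4 b) (e4 c) => ta tb tc ea eb ec.
Z.div_mod_to_equations; lia.
Qed.

Lemma T_succ m : T m <= T m.+1.
Proof.
rewrite /T [X in _ <= X]big_nat_recr //=.
apply: leq_trans (leq_addr _ _).
by apply: leq_sum => y _; lia.
Qed.

Lemma T_mono m1 m2 : m1 <= m2 -> T m1 <= T m2.
Proof.
move=> h; rewrite -(subnK h); elim: (m2 - m1) => [|k IH] //=.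
by apply: leq_trans IH (T_succ _).
Qed.

Lemma T_small m : m <= 4 -> T m = 0.
Proof. by case: m => [|[|[|[|[|]]]]] //= _; rewrite /T unlock. Qed.

Lemma e4_sub c a : 4 * a <= c -> e4 (c - 4 * a) = e4 c.
Proof.
move=> h; rewrite /e4.
have -> : c %% 4 = (c - 4 * a) %% 4.
  by rewrite -{1}(subnK h) -modnDmr modnMr addn0.
done.
Qed.

Lemma Cterm a c : 4 * a <= c -> T c + 2 * (a * a) + 2 * a = T (c - 4 * a) + a * c.
Proof.
move=> h.
move: (T_closed c) (T_closed (c - 4 * a)); rewrite e4_sub // -!mulnn.
move: (T c) (T (c - 4 * a)) (e4 c) => x y e.
nia.
Qed.



Lemma T_lb m : m * m <= 8 * T m + 4 * m.
Proof. move: (T_closed m); rewrite /e4 -mulnn; case: ifP => _; [|case: ifP => _]; lia. Qed.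

Lemma fN_small n : 2 <= n <= 26 -> fN n = 0.
Proof.
rewrite /fN => /andP[h1 h2].
have h : n ^ 2 + 245 - 28 * n < 216.
  rewrite -mulnn; have : (n - 2) * (26 - n) >= 0 by []; nia.
by rewrite divn_small.
Qed.

Lemma lowB a b c :
  fN (5 * a + b + c) <= T a + T b + (T c - T (c - 4 * a)) + T (c - 4 * (5 * a + b)).
Proof.
case: (leqP c (4 * a + 4)) => hc.
  rewrite (@T_small (c - 4 * a)); last lia.
  rewrite (@T_small (c - 4 * (5 * a + b))); last lia.
  rewrite subn0 addn0; exact: K1.
have hC := @Cterm a c ltac:(lia).
case: (leqP (5 * a + b + c) 26) => hn.
  by rewrite fN_small //; lia.
have ha := T_lb a; have hb := T_lb b.
rewrite /fN.
have hP := PZ_nat (5 * a + b + c); rewrite /PZ in hP.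
move: (divn_eq ((5 * a + b + c) ^ 2 + 245 - 28 * (5 * a + b + c)) 216) => hD.
case: (leqP (4 * (5 * a + b)) c) => hd.
  have hd' := T_lb (c - 4 * (5 * a + b)).
  have X := @X1b (Z.of_nat a) (Z.of_nat b) (Z.of_nat c) ltac:(lia) ltac:(lia) ltac:(lia) ltac:(lia) ltac:(lia).
  have hdd : (Z.of_nat c - 20 * Z.of_nat a - 4 * Z.of_nat b = Z.of_nat (c - 4 * (5 * a + b)))%Z by lia.
  rewrite hdd in X.
  move: hC ha hb hd' hP hD X.
  move: ((5 * a + b + c) ^ 2 + 245 - 28 * (5 * a + b + c)) => p.
  move: (T a) (T b) (T c) (T (c - 4 * a)) (T (c - 4 * (5 * a + b))) (p %/ 216) => ta tb tc tc' te q.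
  move: (c - 4 * (5 * a + b)) => d.
  move: (_ \in _) => bb.
  lia.
rewrite (@T_small (c - 4 * (5 * a + b))); last lia.
have X := @X1a (Z.of_nat a) (Z.of_nat b) (Z.of_nat c) ltac:(lia) ltac:(lia) ltac:(lia) ltac:(lia) ltac:(lia).
move: hC ha hb hP hD X.
move: ((5 * a + b + c) ^ 2 + 245 - 28 * (5 * a + b + c)) => p.
move: (T a) (T b) (T c) (T (c - 4 * a)) (p %/ 216) => ta tb tc tc' q.
move: (_ \in _) => bb.
lia.
Qed.

Lemma Mnst_ge n s t : 1 <= s -> s <= t -> t <= n -> fN n <= Mnst 4 n s t.
Proof.
move=> h1 h2 h3.
apply: leq_trans (Mnst_low h2 h3).
case: (leqP (5 * s) t) => h5.
  have := lowB s (t - 5 * s) (n - t).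
  have -> : 5 * s + (t - 5 * s) + (n - t) = n by lia.
  have -> : n - t - 4 * (5 * s + (t - 5 * s)) = n - 5 * t by lia.
  done.
set s' := t %/ 5.
have hs' : 5 * s' <= t < 5 * s' + 5 by rewrite /s'; lia.
have := lowB s' (t - 5 * s') (n - t).
have -> : 5 * s' + (t - 5 * s') + (n - t) = n by lia.
have -> : n - t - 4 * (5 * s' + (t - 5 * s')) = n - 5 * t by lia.
move=> H; apply: leq_trans H _.
rewrite (@T_small (t - 5 * s')); last lia.
rewrite (@T_small (t - 5 * s)); last lia.
have m1 : T s' <= T s by apply: T_mono; lia.
have m2 : T (n - t - 4 * s) <= T (n - t - 4 * s') by apply: T_mono; lia.
have m3 : T (n - t - 4 * s') <= T (n - t) by apply: T_mono; lia.
lia.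
Qed.
Definition Wl : seq (nat * nat * nat) := [:: (1,0,0); (1,0,1); (1,0,2); (1,0,3); (1,0,4); (1,1,4); (1,2,4); (1,3,4); (1,4,4); (2,0,4); (2,1,4); (2,2,4); (2,3,4); (2,4,4); (3,0,4); (3,1,4); (3,2,4); (3,3,4); (3,4,4); (4,0,4); (4,1,4); (4,2,4); (4,3,4); (4,4,4); (4,4,5); (5,1,4); (5,2,4); (5,3,4); (5,4,4); (5,4,5); (6,1,4); (6,2,4); (6,3,4); (6,4,4); (6,4,5); (7,1,4); (7,2,4); (7,3,4); (7,4,4); (7,4,5); (8,1,4); (8,2,4); (8,3,4); (8,4,4); (8,4,5); (8,4,6); (9,2,4); (9,3,4); (9,4,4); (9,4,5); (9,4,6); (10,2,4); (10,3,4); (10,4,4); (10,4,5); (10,4,6); (11,2,4); (11,3,4); (11,4,4); (11,4,5); (11,4,6); (12,2,4); (12,3,4); (12,4,4); (12,4,5); (12,4,6); (12,4,7); (13,3,4); (13,4,4); (13,4,5); (13,4,6); (13,4,7); (14,3,4); (14,4,4); (14,4,5); (14,4,6); (14,4,7); (15,3,4); (15,4,4); (15,4,5); (15,4,6); (15,4,7); (16,3,4); (16,4,4); (16,4,5); (16,4,6); (16,4,7); (16,4,8); (17,4,4); (17,4,5); (17,4,6); (17,4,7); (17,4,8); (18,4,4); (18,4,5); (18,4,6); (18,4,7); (18,4,8); (19,4,4); (19,4,5); (19,4,6); (19,4,7); (19,4,8); (20,4,4); (20,4,5); (20,4,6); (20,4,7); (20,4,8); (20,5,8); (20,6,8); (20,7,8);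 (20,8,8); (21,4,8); (21,5,8); (21,6,8); (21,7,8); (21,8,8); (22,4,8); (22,5,8); (22,6,8); (22,7,8); (22,8,8); (23,4,8); (23,5,8); (23,6,8); (23,7,8); (23,8,8); (24,4,8); (24,5,8); (24,6,8); (24,7,8); (24,8,8); (24,8,9); (25,5,8); (25,6,8); (25,7,8); (25,8,8); (25,8,9); (26,5,8); (26,6,8); (26,7,8); (26,8,8); (26,8,9); (27,5,8); (27,6,8); (27,7,8); (27,8,8); (27,8,9); (28,5,8); (28,6,8); (28,7,8); (28,8,8); (28,8,9); (28,8,10); (29,6,8); (29,7,8); (29,8,8); (29,8,9); (29,8,10); (30,6,8); (30,7,8); (30,8,8); (30,8,9); (30,8,10); (31,6,8); (31,7,8); (31,8,8); (31,8,9); (31,8,10); (32,6,8); (32,7,8); (32,8,8); (32,8,9); (32,8,10); (32,8,11); (33,7,8); (33,8,8); (33,8,9); (33,8,10); (33,8,11); (34,7,8); (34,8,8); (34,8,9); (34,8,10); (34,8,11); (35,7,8); (35,8,8); (35,8,9); (35,8,10); (35,8,11); (36,7,8); (36,8,8); (36,8,9); (36,8,10); (36,8,11); (36,8,12); (37,8,8); (37,8,9); (37,8,10); (37,8,11); (37,8,12); (38,8,8); (38,8,9); (38,8,10); (38,8,11); (38,8,12); (39,8,8); (39,8,9); (39,8,10); (39,8,11); (39,8,12)].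

Definition validb (m : nat) (w : nat * nat * nat) : bool :=
  let: (a, b, c) := w in
  [&& 0 < a, 5 * a + b + c == m, c <= 4 * a + 4, m < 4 * (5 * a + b) + 5 &
      Z.eqb (Psi (Z.of_nat a) (Z.of_nat b) (Z.of_nat c)) 0%Z].

Definition chkW : bool := all (fun m => validb m (nth (0,0,0) Wl (m - 5))) (iota 5 211).

Lemma chkW_true : chkW = true.
Proof. vm_compute. reflexivity. Qed.

Lemma up n : 5 <= n -> exists s t, [/\ 1 <= s, s <= t, t <= n & Mnst 4 n s t <= fN n].
Proof.
move=> hn5.
set m := if n < 216 then n else 108 + n %% 108.
set j := if n < 216 then 0 else n %/ 108 - 1.
have hmj : 5 <= m < 216 /\ n = m + 108 * j.
  rewrite /m /j; case: ifP => h; first lia.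
  move: (divn_eq n 108) (@ltn_pmod n 108 isT); move: (n %/ 108) (n %% 108) => q r; lia.
case: hmj => hm hnj.
have := chkW_true; rewrite /chkW => /allP /(_ m).
rewrite mem_iota => /(_ ltac:(lia)).
case: (nth (0,0,0) Wl (m - 5)) => [[a b] c] /=.
case/and5P => ha /eqP hsum hc ht /Z.eqb_eq hpsi.
exists (a + 20 * j), (5 * (a + 20 * j) + (b + 4 * j)).
have hpsi' : Psi (Z.of_nat (a + 20 * j)) (Z.of_nat (b + 4 * j)) (Z.of_nat (c + 4 * j)) = 0%Z.
  have -> : Z.of_nat (a + 20 * j) = (Z.of_nat a + 20 * Z.of_nat j)%Z by lia.
  have -> : Z.of_nat (b + 4 * j) = (Z.of_nat b + 4 * Z.of_nat j)%Z by lia.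
  have -> : Z.of_nat (c + 4 * j) = (Z.of_nat c + 4 * Z.of_nat j)%Z by lia.
  by rewrite Psi_shift.
have K := K2 hpsi'.
have U := @Mnst_up n (a + 20 * j) (5 * (a + 20 * j) + (b + 4 * j)) ltac:(lia) ltac:(lia) ltac:(lia) ltac:(lia).
split; try lia.
apply: leq_trans U _.
have -> : 5 * (a + 20 * j) + (b + 4 * j) - 5 * (a + 20 * j) = b + 4 * j by lia.
have -> : n - (5 * (a + 20 * j) + (b + 4 * j)) = c + 4 * j by lia.
have -> : n = 5 * (a + 20 * j) + (b + 4 * j) + (c + 4 * j) by lia.
exact: K.
Qed.

Lemma bigmin_le (r : seq nat) (F : nat -> nat) x0 i : i \in r ->
  \big[minn/x0]_(j <- r) F j <= F i.
Proof.
elim: r => [|x r IH] //; rewrite big_cons in_cons => /orP[/eqP ->|/IH h].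
  exact: geq_minl.
exact: leq_trans (geq_minr _ _) h.
Qed.

Lemma bigmin_ge (r : seq nat) (F : nat -> nat) x0 v : v <= x0 ->
  (forall i, i \in r -> v <= F i) -> v <= \big[minn/x0]_(j <- r) F j.
Proof.
move=> h0; elim: r => [|x r IH] H; first by rewrite big_nil.
rewrite big_cons leq_min H ?mem_head //=.
by apply: IH => i hi; apply: H; rewrite in_cons hi orbT.
Qed.

Lemma Mnst_small n s t : n <= 4 -> Mnst 4 n s t = 0.
Proof.
move=> hn; rewrite /Mnst big_nat_cond big1 // => x /andP[/andP[hx _] _].
rewrite big_nat_cond big1 // => y /andP[/andP[hy _] _].
have -> : (x + 4 * y <= n) = false by lia.
done.
Qed.

Theorem theorem4p4 (n : nat) : 1 <= n ->
  Mmin 4 n = (n ^ 2 + 245 - 28 * n) %/ 216 - ((n %% 108) \in I_exc).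
Proof.
move=> hn.
rewrite -/(fN n).
apply/eqP; rewrite eqn_leq; apply/andP; split.
  case: (leqP n 4) => h4.
    rewrite /Mmin.
    apply: leq_trans (bigmin_le _ _ (i := 1) _) _; first by rewrite mem_index_iota; lia.
    apply: leq_trans (bigmin_le _ _ (i := 1) _) _; first by rewrite mem_index_iota; lia.
    by rewrite Mnst_small.
  have [s [t [h1 h2 h3 h4']]] := up h4.
  rewrite /Mmin.
  apply: leq_trans (bigmin_le _ _ (i := s) _) _; first by rewrite mem_index_iota; lia.
  apply: leq_trans (bigmin_le _ _ (i := t) _) _; first by rewrite mem_index_iota; lia.
  exact: h4'.
have h0 : fN n <= Mnst 4 n 1 1 by apply: Mnst_ge.
rewrite /Mmin; apply: bigmin_ge => // s; rewrite mem_index_iota => hs.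
apply: bigmin_ge => // t; rewrite mem_index_iota => ht.
apply: Mnst_ge; lia.
Qed.
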